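(* Let $U$ be an infinite complex matrix (rows and columns indexed by positive integers) with finitely many nonzero entries in every row and every column. Then $U$ is unitary (i.e. $UU^*=U^*U=I$) if and only if $U^*U=I$ and every row of $U$ has norm $1$.
   Context: $U^*$ denotes the Hermitian conjugate of $U$; $I$ is the infinite identity matrix; products of infinite matrices are defined entrywise by $(XY)_{ij}=\sum_k x_{ik}y_{kj}$. *)

(* Defs.v *)
(* complex numbers R[i] over a real closed field R
   (R[i] is a numClosedFieldType; for R a realType this is the field C). *)
From HB Require Import structures.
From mathcomp Require Import all_boot all_order all_algebra.
From mathcomp Require Import complex.
Set Implicit Arguments. Unset Strict Implicit. Unset Printing Implicit Defensive.
Import Order.TTheory GRing.Theory Num.Theory.
Local Open Scope ring_scope.

(* Infinite matrices; index i : nat stands for the positive integer i+1. *)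
Definition imatrix (T : Type) := nat -> nat -> T.

Section Defs.
Variable R : rcfType.
Local Notation C := R[i].

Definition row_col_finite (U : imatrix C) : Prop :=
  (forall i, exists N, forall j, (N <= j)%N -> U i j = 0) /\
  (forall j, exists N, forall i, (N <= i)%N -> U i j = 0).

Definition adjoint (U : imatrix C) : imatrix C := fun i j => (U j i)^*.

Definition idimx : imatrix C := fun i j => (i == j)%:R.

(* the series sum_k f k equals c (partial sums are eventually equal to c;
   for the finitely supported sequences occurring here this is exactly
   convergence of the series to c) *)
Definition sums_to (f : nat -> C) (c : C) : Prop :=
  exists N, forall M, (N <= M)%N -> \sum_(k < M) f k = c.

Definition imx_mul_eq (X Y Z : imatrix C) : Prop :=
  forall i j, sums_to (fun k => X i k * Y k j) (Z i j).

Definition unitary (U : imatrix C) : Prop :=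
  imx_mul_eq U (adjoint U) idimx /\ imx_mul_eq (adjoint U) U idimx.

Definition rows_norm1 (U : imatrix C) : Prop :=
  forall i, sums_to (fun j => `|U i j| ^+ 2) 1.

End Defs.

(* Main.v *)
Require Import Defs.
From mathcomp Require Import all_boot all_order all_algebra.
From mathcomp Require Import complex.
From mathcomp Require Import ring.
Set Implicit Arguments. Unset Strict Implicit. Unset Printing Implicit Defensive.
Import Order.TTheory GRing.Theory Num.Theory.
Local Open Scope ring_scope.

Section Aux.
Variable R : rcfType.
Local Notation C := R[i].

Lemma sum_ext (f : nat -> C) B M M' : (forall k, (B <= k)%N -> f k = 0) ->
  (B <= M)%N -> (M <= M')%N -> \sum_(k < M') f k = \sum_(k < M) f k.
Proof.
move=> Hz HB HM.
rewrite -!(big_mkord (fun _ => true)) (big_cat_nat (leq0n M) HM) /=.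
rewrite [X in _ + X = _]big_nat_cond [X in _ + X = _]big1 ?addr0 // => k /andP[/andP[Hk _] _].
by apply: Hz; apply: leq_trans Hk.
Qed.

Lemma sums_fin (f : nat -> C) c B : (forall k, (B <= k)%N -> f k = 0) ->
  sums_to f c -> forall M, (B <= M)%N -> \sum_(k < M) f k = c.
Proof.
move=> Hz [N HN] M HM.
rewrite -(HN (maxn M N)) ?leq_maxr //.
by rewrite (@sum_ext f B M (maxn M N)) // leq_maxl.
Qed.

Lemma sums_of (f : nat -> C) c B : (forall k, (B <= k)%N -> f k = 0) ->
  \sum_(k < B) f k = c -> sums_to f c.
Proof.
move=> Hz Hs; exists B => M HM; by rewrite (@sum_ext f B B M).
Qed.

Lemma sum_delta n i (F : nat -> C) : (i < n)%N ->
  \sum_(l < n) ((l : nat) == i)%:R * F l = F i.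
Proof.
move=> Hi; rewrite (bigD1 (Ordinal Hi)) //= eqxx mul1r big1 ?addr0 // => j Hj.
have -> : (nat_of_ord j == i) = false.
  apply/negbTE; move: Hj; apply: contra => /eqP E; apply/eqP/val_inj; exact: E.
by rewrite mul0r.
Qed.

Lemma col_bound (U : imatrix C) : row_col_finite U ->
  forall K, exists L, forall k l, (k < K)%N -> (L <= l)%N -> U l k = 0.
Proof.
move=> [_ Hc]; elim=> [|K [L HL]]; first by exists 0%N.
have [N HN] := Hc K; exists (maxn L N) => k l Hk Hl.
rewrite ltnS leq_eqVlt in Hk; case/orP: Hk => [/eqP ->|Hk].
  by apply: HN; apply: leq_trans Hl; apply: leq_maxr.
by apply: HL => //; apply: leq_trans Hl; apply: leq_maxl.
Qed.

End Aux.

Theorem lemma4 (R : rcfType) (U : imatrix R[i]) :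
  row_col_finite U ->
  (unitary U <-> (imx_mul_eq (adjoint U) U (@idimx R) /\ rows_norm1 U)).
Proof.
move=> Hf; have [Hr Hc] := Hf; split.
  move=> [H1 H2]; split => // i; have [N HN] := H1 i i.
  exists N => M HM; have := HN M HM; rewrite /idimx eqxx mulr1n => <-; apply: eq_bigr => k _.
  by rewrite normCK.
move=> [HUU Hrow]; split => //.
move=> l0 i; have [K HK] := Hr i.
pose P l := \sum_(k < K) U l k * (U i k)^*.
pose d l : R[i] := (l == i)%:R.
have [L HL] := col_bound Hf K.
pose L' := maxn L i.+1.
have HiL : (i < L')%N by rewrite leq_maxr.
have Hcol : forall k k' : 'I_K,
    \sum_(l < L') U l k * (U l k')^* = (nat_of_ord k == nat_of_ord k')%:R.
  move=> k k'.
  have H := sums_fin (B := L) _ (HUU k k') (leq_maxl L i.+1).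
  rewrite /idimx in H.
  rewrite -[RHS]conjC_nat -H; last first.
    by move=> l Hl; rewrite /adjoint (HL k l (ltn_ord k)) // conjC0 mul0r.
  rewrite rmorph_sum; apply: eq_bigr => l _.
  by rewrite /adjoint rmorphM /= conjCK mulrC.
have Hrowi : \sum_(k < K) U i k * (U i k)^* = 1.
  rewrite -(sums_fin (B := K) _ (Hrow i) (leqnn K)).
    by apply: eq_bigr => k _; rewrite normCK.
  by move=> k Hk; rewrite HK // normr0 expr0n.
have HPi : P i = 1 by [].
have E1 : forall l, P l * (P l)^* = \sum_(k < K) \sum_(k' < K)
     ((U i k)^* * U i k') * (U l k * (U l k')^*).
  move=> l; rewrite /P rmorph_sum big_distrl /=; apply: eq_bigr => k _.
  rewrite big_distrr /=; apply: eq_bigr => k' _; rewrite rmorphM /= conjCK; ring.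
have A1 : \sum_(l < L') P l * (P l)^* = 1.
  under eq_bigr => l _ do rewrite E1.
  rewrite exchange_big /=.
  rewrite -[RHS]Hrowi; apply: eq_bigr => k _.
  rewrite exchange_big /=.
  under eq_bigr => k' _ do rewrite -big_distrr /= Hcol.
  rewrite (eq_bigr (fun k' : 'I_K => ((k' : nat) == k)%:R * ((U i k)^* * U i k'))); last first.
    by move=> k' _; rewrite mulrC eq_sym.
  rewrite (sum_delta (fun k' => (U i k)^* * U i k') (ltn_ord k)).
  by rewrite mulrC.
have A2 : \sum_(l < L') d l * (P l)^* = 1.
  by rewrite (sum_delta (fun l => (P l)^*) HiL) HPi conjC1.
have A3 : \sum_(l < L') d l * P l = 1.
  by rewrite (sum_delta P HiL).
have A4 : \sum_(l < L') d l * (d l) = 1.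
  by rewrite (sum_delta d HiL) /d eqxx.
have S0 : \sum_(l < L') `|P l - d l| ^+ 2 = 0.
  have -> : \sum_(l < L') `|P l - d l| ^+ 2 =
     \sum_(l < L') P l * (P l)^* - \sum_(l < L') d l * (P l)^*
     - \sum_(l < L') d l * P l + \sum_(l < L') d l * (d l).
    rewrite -!sumrB -big_split /=; apply: eq_bigr => l _.
    rewrite normCK rmorphB /d /= conjC_nat; ring.
  by rewrite A1 A2 A3 A4; ring.
have HP : forall l, P l = d l.
  move=> l; case: (ltnP l L') => Hl.
    have := psumr_eq0P _ S0.
    move=> /(_ (fun _ _ => exprn_ge0 2 (normr_ge0 _)) (Ordinal Hl) isT) /=.
    by move=> /eqP; rewrite sqrf_eq0 normr_eq0 subr_eq0 => /eqP.
  rewrite /P /d big1 => [|k _]; last first.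
    rewrite (HL k l (ltn_ord k)) ?mul0r //; apply: leq_trans Hl; exact: leq_maxl.
  have -> : (l == i) = false by apply/negbTE; rewrite neq_ltn (leq_trans HiL Hl) orbT.
  by [].
apply: (@sums_of _ _ _ K).
  by move=> k Hk; rewrite /adjoint (HK k Hk) conjC0 mulr0.
exact: HP.
Qed.
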